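(* For all teams $T,S$ the following are equivalent: (1) $T\equiv_{\mathrm{st}}S$; (2) for all teams $T_1,T_2$ with $T=T_1\cup T_2$ there are teams $S_1,S_2$ with $S=S_1\cup S_2$, $T_1\equiv_{\mathrm{st}}S_1$ and $T_2\equiv_{\mathrm{st}}S_2$.
   Context: A trace is an infinite sequence $t=t(0)t(1)\cdots$ of subsets of a set $\mathrm{AP}$ of propositions; a team is a set of traces. A stuttering function of a trace $t$ is a strictly increasing function $f:\mathbb N\to\mathbb N$ with $f(0)=0$ such that $t(f(k))=t(f(k)+1)=\cdots=t(f(k+1)-1)$ for all $k\ge0$. A stuttering function of a team $T$ is a function that is a stuttering function of every $t\in T$. For $f:\mathbb N\to\mathbb N$, $t[f]:=t(f(0))t(f(1))t(f(2))\cdots$ and $T[f]:=\{t[f]:t\in T\}$. Teams $T,T'$ are stutter-equivalent ($T\equiv_{\mathrm{st}}T'$) if there are a stuttering function $f$ of $T$ and a stuttering function $f'$ of $T'$ with $T[f]=T'[f']$. *)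

(* Defs.v *)
From Stdlib Require Import Arith.

Definition trace (AP : Type) := nat -> (AP -> Prop).
Definition team (AP : Type) := trace AP -> Prop.

Definition stuttering_fun {AP : Type} (t : trace AP) (f : nat -> nat) : Prop :=
  f 0 = 0 /\
  (forall k, f k < f (S k)) /\
  (forall k i, f k <= i < f (S k) -> t i = t (f k)).

Definition stuttering_fun_team {AP : Type} (T : team AP) (f : nat -> nat) : Prop :=
  (forall k, f k < f (S k)) /\ f 0 = 0 /\
  forall t, T t -> stuttering_fun t f.

Definition trace_at {AP : Type} (t : trace AP) (f : nat -> nat) : trace AP :=
  fun k => t (f k).

Definition team_at {AP : Type} (T : team AP) (f : nat -> nat) : team AP :=
  fun u => exists t, T t /\ u = trace_at t f.

Definition team_eq {AP : Type} (T S : team AP) : Prop := forall t, T t <-> S t.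

Definition stutter_equiv {AP : Type} (T T' : team AP) : Prop :=
  exists f f', stuttering_fun_team T f /\ stuttering_fun_team T' f' /\
    team_eq (team_at T f) (team_at T' f').

Definition team_union {AP : Type} (T1 T2 : team AP) : team AP :=
  fun t => T1 t \/ T2 t.

(* Main.v *)
Require Import Defs.

Lemma sft_sub {AP : Type} (T T' : team AP) f :
  (forall t, T' t -> T t) -> stuttering_fun_team T f -> stuttering_fun_team T' f.
Proof. intros H [a [b c]]. split; [|split]; auto. Qed.

Theorem mainTheorem7 (AP : Type) (T S : team AP) :
  stutter_equiv T S <->
  (forall T1 T2 : team AP, team_eq T (team_union T1 T2) ->
     exists S1 S2 : team AP, team_eq S (team_union S1 S2) /\
       stutter_equiv T1 S1 /\ stutter_equiv T2 S2).
Proof.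
  split.
  - intros [f [f' [Hf [Hf' He]]]] T1 T2 HT.
    exists (fun s => S s /\ team_at T1 f (trace_at s f')).
    exists (fun s => S s /\ team_at T2 f (trace_at s f')).
    split; [|split].
    + intro s; split.
      * intro Hs.
        destruct (proj2 (He (trace_at s f'))) as [t [Ht Hu]].
        { exists s; auto. }
        destruct (proj1 (HT t) Ht) as [H1|H1]; [left|right]; split; auto;
          exists t; auto.
      * intros [[H _]|[H _]]; auto.
    + exists f, f'; split; [|split].
      * apply sft_sub with T; auto. intros t Ht; apply HT; left; auto.
      * apply sft_sub with S; auto. intros t [Ht _]; auto.
      * intro u; split.
        -- intros [t [Ht Hu]].
           destruct (proj1 (He u)) as [s [Hs Hs']].
           { exists t; split; auto. apply HT; left; auto. }
           exists s; split; auto. split; auto. rewrite <- Hs'. exists t; auto.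
        -- intros [s [[Hs Hs1] Hu]]. subst u. exact Hs1.
    + exists f, f'; split; [|split].
      * apply sft_sub with T; auto. intros t Ht; apply HT; right; auto.
      * apply sft_sub with S; auto. intros t [Ht _]; auto.
      * intro u; split.
        -- intros [t [Ht Hu]].
           destruct (proj1 (He u)) as [s [Hs Hs']].
           { exists t; split; auto. apply HT; right; auto. }
           exists s; split; auto. split; auto. rewrite <- Hs'. exists t; auto.
        -- intros [s [[Hs Hs1] Hu]]. subst u. exact Hs1.
  - intros H.
    destruct (H T (fun _ => False)) as [S1 [S2 [HS [[f [f' [Hf [Hf' He]]]] [g [g' [Hg [Hg' He2]]]]]]]].
    { intro t; unfold team_union; tauto. }
    assert (E2 : forall s, ~ S2 s).
    { intros s Hs. destruct (proj2 (He2 (trace_at s g'))) as [t [[] _]].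
      exists s; auto. }
    exists f, f'; split; [|split]; auto.
    + apply sft_sub with S1; auto. intros t Ht.
      destruct (proj1 (HS t) Ht) as [|H2]; auto. exfalso; eapply E2; eauto.
    + intro u; split.
      * intro Hu. destruct (proj1 (He u) Hu) as [s [Hs Hs']].
        exists s; split; auto. apply HS; left; auto.
      * intros [s [Hs Hs']]. apply He. exists s; split; auto.
        destruct (proj1 (HS s) Hs) as [|H2]; auto. exfalso; eapply E2; eauto.
Qed.
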